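(* Let $N\ge 1$, let $z_1,\dots,z_N\in\mathbb{C}^*$ and $n_1,\dots,n_N\in\mathbb{C}$. Then the assignment \[ X\mapsto \sum_{i=1}^N z_1^{-1}\cdots z_{i-1}^{-1}\,z_{i+1}\cdots z_N\,a_i,\qquad Y\mapsto \sum_{i=1}^N z_1^{-1}\cdots z_{i-1}^{-1}\,(z_i^2-z_i^{-2})\,z_{i+1}\cdots z_N\,b_i, \] \[ t\mapsto z_1\cdots z_N,\qquad G\mapsto \sum_{i=1}^N (n_i+a_ib_i) \] defines a unique (super)algebra homomorphism $\Phi_{\mathbf n,\mathbf z}:U_q(\mathfrak{gl}(1|1))\to \mathrm{Cl}_N$. Moreover, the $U_q(\mathfrak{gl}(1|1))$-module obtained by pulling back the $\mathrm{Cl}_N$-module $U_N$ along $\Phi_{\mathbf n,\mathbf z}$ is isomorphic to the tensor product representation $V_{z_1,n_1}\otimes\cdots\otimes V_{z_N,n_N}$.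
   Context: All algebras are over $\mathbb{C}$ and are superalgebras (i.e. $\mathbb{Z}/2$-graded). $U_q(\mathfrak{gl}(1|1))$ denotes the superalgebra generated by odd elements $X,Y$ and even elements $G$, $t$, $t^{-1}$ subject to the relations $tt^{-1}=t^{-1}t=1$, $XY+YX=t^2-t^{-2}$, $X^2=Y^2=0$, $GX-XG=X$, $GY-YG=-Y$, and $t$ commutes with $X,Y,G$. It is a Hopf superalgebra with coproduct $\Delta X=X\otimes t+t^{-1}\otimes X$, $\Delta Y=Y\otimes t+t^{-1}\otimes Y$, $\Delta t=t\otimes t$, $\Delta G=G\otimes 1+1\otimes G$; tensor products of modules are formed via $\Delta$ using the Koszul sign rule $(a\otimes b)(x\otimes y)=(-1)^{|b||x|}ax\otimes by$. For $z\in\mathbb{C}^*$, $n\in\mathbb{C}$, $V_{z,n}$ is the $2$-dimensional module with basis $v$ (even), $u$ (odd) such that $Xv=u$, $Yv=0$, $Gv=nv$, $tv=zv$, $Xu=0$, $Gu=(n+1)u$, $Yu=(z^2-z^{-2})v$, $tu=zu$. $\mathrm{Cl}_N$ is the Clifford superalgebra generated by odd elements $a_1,\dots,a_N,b_1,\dots,b_N$ with relations $a_ia_j+a_ja_i=0$, $b_ib_j+b_jb_i=0$, $a_ib_j+b_ja_i=\delta_{ij}$. $U_N$ is its irreducible $2^N$-dimensional module generated by a vector $v$ with $b_iv=0$ for all $i$; equivalently $U_N=\bigwedge^\bullet U$ with $U=\mathrm{span}(a_1,\dots,a_N)$, $a_i$ acting by left wedge multiplication and $b_i$ by the corresponding contraction,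 with parity given by degree mod 2. *)

(* Defs.v *)
From HB Require Import structures.
From mathcomp Require Import all_boot all_order all_algebra.
From mathcomp Require Import complex mxtens.
From mathcomp Require Import Rstruct.
Set Implicit Arguments.
Unset Strict Implicit.
Unset Printing Implicit Defensive.
Import GRing.Theory.
Local Open Scope ring_scope.

Definition C : fieldType := (Rdefinitions.R)[i].

Definition Uq_rels (A : pzRingType) (X Y G t ti : A) : Prop :=
  [/\ t * ti = 1 /\ ti * t = 1,
      X * Y + Y * X = t ^+ 2 - ti ^+ 2,
      X ^+ 2 = 0 /\ Y ^+ 2 = 0,
      G * X - X * G = X /\ G * Y - Y * G = - Y
    & t * X = X * t /\ t * Y = Y * t /\ t * G = G * t].

Definition cliff_rels (A : pzRingType) (N : nat) (a b : 'I_N -> A) : Prop :=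
  forall i j : 'I_N,
    [/\ a i * a j + a j * a i = 0,
        b i * b j + b j * b i = 0
      & a i * b j + b j * a i = (i == j)%:R].

(** A Z/2-grading of a C-algebra A (char 0), encoded by its parity
    involution sigma (sigma = id on the even part, -id on the odd part). *)
Definition is_parity_aut (A : algType C) (sigma : A -> A) : Prop :=
  [/\ forall x y, sigma (x + y) = sigma x + sigma y,
      forall x y, sigma (x * y) = sigma x * sigma y,
      sigma 1 = 1,
      forall (c : C) x, sigma (c *: x) = c *: sigma x
    & forall x, sigma (sigma x) = x].

(** * The images of the generators under Phi_{n,z}.
      [sc] is the embedding of scalars C into the target ring. *)
Section Phi.
Variables (A : pzRingType) (sc : C -> A) (N : nat) (z n : 'I_N -> C)
          (a b : 'I_N -> A).

(** z_1^{-1} ... z_{i-1}^{-1} z_{i+1} ... z_N  (indices from 0 here) *)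
Definition coefX (i : 'I_N) : C :=
  (\prod_(j < N | (j < i)%N) (z j)^-1) * (\prod_(j < N | (i < j)%N) z j).

Definition coefY (i : 'I_N) : C :=
  (\prod_(j < N | (j < i)%N) (z j)^-1) * (z i ^+ 2 - (z i)^-2)
    * (\prod_(j < N | (i < j)%N) z j).

Definition PhiX : A := \sum_(i < N) sc (coefX i) * a i.
Definition PhiY : A := \sum_(i < N) sc (coefY i) * b i.
Definition Phit : A := sc (\prod_(i < N) z i).
Definition Phiti : A := sc ((\prod_(i < N) z i)^-1).
Definition PhiG : A := \sum_(i < N) (sc (n i) + a i * b i).
End Phi.

(** * Finite-dimensional U_q(gl(1|1))-supermodules, given by the
      (column-vector) matrices of the actions of X, Y, G, t, t^{-1}
      on C^sdim, together with the parity of each basis vector. *)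
Record smod := SMod {
  sdim : nat;
  spar : 'I_sdim -> bool;
  sX : 'M[C]_sdim;
  sY : 'M[C]_sdim;
  sG : 'M[C]_sdim;
  st : 'M[C]_sdim;
  sti : 'M[C]_sdim }.
Arguments spar : clear implicits.

Definition smod_iso (M1 M2 : smod) : Prop :=
  exists (P : 'M[C]_(sdim M2, sdim M1)) (Q : 'M[C]_(sdim M1, sdim M2)),
    [/\ Q *m P = 1%:M /\ P *m Q = 1%:M,
        forall i j, P i j != 0 -> spar M2 i = spar M1 j,
        P *m sX M1 = sX M2 *m P /\ P *m sY M1 = sY M2 *m P,
        P *m sG M1 = sG M2 *m P
      & P *m st M1 = st M2 *m P /\ P *m sti M1 = sti M2 *m P].

(** The module V_{z,n}: basis index 0 = v (even), 1 = u (odd). *)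
Definition Vmod (z n : C) : smod :=
  {| sdim := 2;
     spar := fun i => i == 1 :> nat;
     sX := \matrix_(i < 2, j < 2) (if (i == 1 :> nat) && (j == 0 :> nat) then 1 else 0);
     sY := \matrix_(i < 2, j < 2)
             (if (i == 0 :> nat) && (j == 1 :> nat) then z ^+ 2 - z^-2 else 0);
     sG := \matrix_(i < 2, j < 2) (if i == j then n + (i : nat)%:R else 0);
     st := z%:M;
     sti := z^-1%:M |}.

Definition parity_mx (M : smod) : 'M[C]_(sdim M) :=
  \matrix_(i, j) (if i == j then (-1) ^+ spar M i else 0).

(** Tensor product of supermodules via
    Delta X = X (x) t + t^{-1} (x) X, Delta Y = Y (x) t + t^{-1} (x) Y,
    Delta t = t (x) t, Delta G = G (x) 1 + 1 (x) G, with the Koszul sign rule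
    (a (x) b)(x (x) y) = (-1)^{|b||x|} ax (x) by.  Basis vector index
    (i,j) of M1 (x) M2 is mxtens_index (i,j). *)
Definition stensor (M1 M2 : smod) : smod :=
  {| sdim := sdim M1 * sdim M2;
     spar := fun k => spar M1 (mxtens_unindex k).1 (+) spar M2 (mxtens_unindex k).2;
     sX := sX M1 *t st M2 + (sti M1 *m parity_mx M1) *t sX M2;
     sY := sY M1 *t st M2 + (sti M1 *m parity_mx M1) *t sY M2;
     sG := sG M1 *t 1%:M + 1%:M *t sG M2;
     st := st M1 *t st M2;
     sti := sti M1 *t sti M2 |}.

(** The trivial (counit) module; only used for the empty list. *)
Definition triv_mod : smod :=
  {| sdim := 1; spar := fun _ => false; sX := 0; sY := 0; sG := 0;
     st := 1%:M; sti := 1%:M |}.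

Fixpoint tens_list (s : seq (C * C)) : smod :=
  match s with
  | [::] => triv_mod
  | [:: p] => Vmod p.1 p.2
  | p :: s' => stensor (Vmod p.1 p.2) (tens_list s')
  end.

(** * The Clifford module U_N = /\^* span(a_1..a_N), basis e_S indexed by
      subsets S of 'I_N (e_S = a_{s_1} /\ ... /\ a_{s_k}, s_1 < ... < s_k). *)
Definition UNdim (N : nat) : nat := #|{set 'I_N}|.

Definition UNset (N : nat) (k : 'I_(UNdim N)) : {set 'I_N} := enum_val k.

(** a_i: left wedge multiplication. *)
Definition UN_a (N : nat) (i : 'I_N) : 'M[C]_(UNdim N) :=
  \matrix_(r, c)
    (let S := UNset c in
     if (i \notin S) && (UNset r == i |: S)
     then (-1) ^+ #|[set s in S | (s < i)%N]| else 0).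

(** b_i: contraction (odd derivation with b_i(a_j) = delta_ij). *)
Definition UN_b (N : nat) (i : 'I_N) : 'M[C]_(UNdim N) :=
  \matrix_(r, c)
    (let S := UNset c in
     if (i \in S) && (UNset r == S :\ i)
     then (-1) ^+ #|[set s in S | (s < i)%N]| else 0).

Definition UN_pullback (N : nat) (z n : 'I_N -> C) : smod :=
  let sc := fun c : C => (c%:M : 'M[C]_(UNdim N)) in
  {| sdim := UNdim N;
     spar := fun k => odd #|UNset k|;
     sX := PhiX sc z (@UN_a N);
     sY := PhiY sc z (@UN_b N);
     sG := PhiG sc n (@UN_a N) (@UN_b N);
     st := Phit sc z;
     sti := Phiti sc z |}.

(* Main.v *)
Require Import Defs.
From HB Require Import structures.
From mathcomp Require Import all_boot all_order all_algebra.
From mathcomp Require Import complex mxtens ring Rstruct.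
Import GRing.Theory Num.Theory.
Local Open Scope ring_scope.

Lemma two_neq0 : (2%:R : C) != 0.
Proof.
have H : (2%:R : (Rdefinitions.R)[i]) != 0 by rewrite pnatr_eq0.
exact: H.
Qed.

Section Alg.
Variables (A : algType C) (N : nat).

Lemma two_zero (x : A) : x + x = 0 -> x = 0.
Proof.
move=> H; have : (2%:R : C)^-1 *: ((2%:R : C) *: x) = 0 by rewrite scaler_nat -[x *+ 2]/(x + x) H scaler0.
by rewrite scalerA mulVf ?scale1r // two_neq0.
Qed.

Lemma sq_sum0 (u : 'I_N -> A) (c : 'I_N -> C) :
  (forall i j, u i * u j + u j * u i = 0) ->
  (\sum_(i < N) c i *: u i) ^+ 2 = 0.
Proof.
move=> Hu; apply: two_zero; rewrite expr2.
have E : (\sum_(i < N) c i *: u i) * (\sum_(i < N) c i *: u i)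
   = \sum_(i < N) \sum_(j < N) (c i * c j) *: (u i * u j).
  rewrite mulr_suml; apply: eq_bigr => i _; rewrite mulr_sumr; apply: eq_bigr => j _.
  by rewrite -scalerAl -scalerAr scalerA.
rewrite E {2}exchange_big -big_split /=; apply: big1 => i _.
rewrite -big_split /=; apply: big1 => j _.
by rewrite [c j * c i]mulrC -scalerDr Hu scaler0.
Qed.

Lemma anti_sum (a b : 'I_N -> A) (c d : 'I_N -> C) :
  (forall i j, a i * b j + b j * a i = (i == j)%:R) ->
  (\sum_(i < N) c i *: a i) * (\sum_(i < N) d i *: b i)
  + (\sum_(i < N) d i *: b i) * (\sum_(i < N) c i *: a i)
  = (\sum_(i < N) c i * d i)%:A.
Proof.
move=> Hab.
rewrite !mulr_suml.
under eq_bigr do rewrite mulr_sumr.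
under [X in _ + X]eq_bigr do rewrite mulr_sumr.
rewrite [X in _ + X]exchange_big -big_split /= scaler_suml; apply: eq_bigr => i _.
rewrite -big_split /= (bigD1 i) //= big1 ?addr0.
  by rewrite -!scalerAl -!scalerAr !scalerA [d i * c i]mulrC -scalerDr Hab eqxx.
move=> j /negbTE ji.
by rewrite -!scalerAl -!scalerAr !scalerA [d j * c i]mulrC -scalerDr Hab eq_sym ji scaler0.
Qed.

Lemma comm_sum_l I (r : seq I) (g : I -> A) (y : A) :
  (\sum_(i <- r) g i) * y - y * (\sum_(i <- r) g i) = \sum_(i <- r) (g i * y - y * g i).
Proof. by rewrite mulr_suml mulr_sumr -sumrB. Qed.

Lemma comm_sum_r (x : A) (c : 'I_N -> C) (u : 'I_N -> A) :
  x * (\sum_(j < N) c j *: u j) - (\sum_(j < N) c j *: u j) * x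
  = \sum_(j < N) c j *: (x * u j - u j * x).
Proof.
rewrite mulr_suml mulr_sumr -sumrB; apply: eq_bigr => j _.
by rewrite scalerBr -scalerAl -scalerAr.
Qed.

Lemma delta_sum (c : 'I_N -> C) (u : 'I_N -> A) :
  \sum_(i < N) \sum_(j < N) c j *: ((i == j)%:R * u j) = \sum_(j < N) c j *: u j.
Proof.
rewrite exchange_big; apply: eq_bigr => j _.
rewrite (bigD1 j) //= eqxx mul1r big1 ?addr0 // => i /negbTE ->.
by rewrite mul0r scaler0.
Qed.

Variables (a b : 'I_N -> A).
Hypothesis Hc : cliff_rels a b.

Lemma aa0 i j : a i * a j = - (a j * a i).
Proof. by case: (Hc i j) => E _ _; apply/eqP; rewrite -addr_eq0 E. Qed.
Lemma bb0 i j : b i * b j = - (b j * b i).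
Proof. by case: (Hc i j) => _ E _; apply/eqP; rewrite -addr_eq0 E. Qed.
Lemma ba i j : b j * a i = (i == j)%:R - a i * b j.
Proof. by case: (Hc i j) => _ _ E; rewrite -E [a i * b j + _]addrC addrK. Qed.

Lemma ab i j : a i * b j = (i == j)%:R - b j * a i.
Proof. by case: (Hc i j) => _ _ E; rewrite -E addrK. Qed.

Lemma commGa (k : C) i j :
  (k%:A + a i * b i) * a j - a j * (k%:A + a i * b i) = (i == j)%:R * a j.
Proof.
rewrite mulrDl mulrDr mulr_algl mulr_algr opprD addrACA subrr add0r.
rewrite -mulrA ba mulrBr mulrA aa0 mulNr opprK mulrA subrK.
rewrite eq_sym; case: eqP => [->|_]; rewrite ?mulr1 ?mul1r ?mulr0 ?mul0r //.
Qed.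

Lemma commGb (k : C) i j :
  (k%:A + a i * b i) * b j - b j * (k%:A + a i * b i) = - ((i == j)%:R * b j).
Proof.
rewrite mulrDl mulrDr mulr_algl mulr_algr opprD addrACA subrr add0r.
rewrite -mulrA bb0 mulrN [a i * (_ * _)]mulrA ab mulrBl opprB -!mulrA addrAC subrr add0r.
by case: eqP => [->|_]; rewrite ?mulr1 ?mul1r ?mulr0 ?mul0r ?oppr0.
Qed.
End Alg.
Notation coefX := Defs.coefX.
Notation coefY := Defs.coefY.

Section Coef.
Variable N : nat.
Variable z : 'I_N.+1 -> C.
Let z' := fun j : 'I_N => z (lift ord0 j).

Lemma coefX0 : coefX z ord0 = \prod_(j < N) z' j.
Proof.
rewrite /coefX big_pred0 // mul1r big_mkcond big_ord_recl ltnn Monoid.mul1m.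
by apply: eq_bigr => j _; rewrite /bump /=.
Qed.

Lemma coefXS i : coefX z (lift ord0 i) = (z ord0)^-1 * coefX z' i.
Proof.
rewrite /coefX !(big_mkcond (fun j => (_ < _)%N)) !big_ord_recl /= mul1r -mulrA.
do 2 f_equal; apply: eq_bigr => j _; by rewrite /bump /= !add1n ltnS.
Qed.

Lemma coefY0 : coefY z ord0 = (z ord0 ^+ 2 - (z ord0)^-2) * \prod_(j < N) z' j.
Proof.
rewrite /coefY big_pred0 // mul1r big_mkcond big_ord_recl ltnn Monoid.mul1m.
by congr (_ * _); apply: eq_bigr => j _; rewrite /bump /=.
Qed.

Lemma coefYS i : coefY z (lift ord0 i) = (z ord0)^-1 * coefY z' i.
Proof.
rewrite /coefY !(big_mkcond (fun j => (_ < _)%N)) !big_ord_recl /= mul1r -!mulrA.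
do 3 f_equal; apply: eq_bigr => j _; by rewrite /bump /= !add1n ltnS.
Qed.
End Coef.

Lemma telescope N (z : 'I_N -> C) :
  \sum_(i < N) coefX z i * coefY z i = (\prod_(i < N) z i) ^+ 2 - ((\prod_(i < N) z i)^-1) ^+ 2.
Proof.
elim: N z => [|N IH] z; first by rewrite !big_ord0 invr1 expr1n subrr.
rewrite [LHS]big_ord_recl coefX0 coefY0.
set z' := fun j : 'I_N => z (lift ord0 j).
have H : \sum_(i < N) coefX z (lift ord0 i) * coefY z (lift ord0 i)
   = (z ord0)^-2 * \sum_(i < N) coefX z' i * coefY z' i.
  rewrite mulr_sumr; apply: eq_bigr => i _; rewrite coefXS coefYS -/z'.
  by rewrite expr2 invfM; ring.
rewrite H IH big_ord_recl -/z'.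
set p := \prod_(j < N) z' j.
rewrite !invfM; ring.
Qed.

Lemma part1 (N : nat) (z n : 'I_N -> C) : (forall i, z i != 0) ->
  (forall (A : algType C) (a b : 'I_N -> A) (sigma : A -> A),
     cliff_rels a b -> is_parity_aut sigma ->
     (forall i, sigma (a i) = - a i /\ sigma (b i) = - b i) ->
     let sc := fun c : C => c%:A in
     Uq_rels (PhiX sc z a) (PhiY sc z b) (PhiG sc n a b) (Phit sc z) (Phiti sc z)
     /\ [/\ sigma (PhiX sc z a) = - PhiX sc z a,
            sigma (PhiY sc z b) = - PhiY sc z b,
            sigma (PhiG sc n a b) = PhiG sc n a b,
            sigma (Phit sc z) = Phit sc z
          & sigma (Phiti sc z) = Phiti sc z]).
Proof.
move=> Hz A a b sigma Hc [sD sM s1 sZ sI] Hab sc.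
have PX : PhiX sc z a = \sum_(i < N) coefX z i *: a i.
  by apply: eq_bigr => i _; rewrite /sc mulr_algl.
have PY : PhiY sc z b = \sum_(i < N) coefY z i *: b i.
  by apply: eq_bigr => i _; rewrite /sc mulr_algl.
have PG : PhiG sc n a b = \sum_(i < N) ((n i)%:A + a i * b i) by [].
set p := \prod_(i < N) z i.
have Pt : Phit sc z = p%:A by [].
have Pti : Phiti sc z = p^-1%:A by [].
have Hp : p != 0 by apply/prodf_neq0 => i _; apply: Hz.
have Hab' : forall i j, a i * b j + b j * a i = (i == j)%:R by move=> i j; case: (Hc i j).
split.
  split.
  - by rewrite Pt Pti !mulr_algl !scalerA mulfV // mulVf // scale1r.
  - rewrite PX PY anti_sum // telescope Pt Pti -/p !expr2 !mulr_algl !scalerA.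
    by rewrite scalerBl.
  - rewrite PX PY !sq_sum0 //.
      by move=> i j; case: (Hc i j).
    by move=> i j; case: (Hc i j).
  - split.
      rewrite PG PX comm_sum_l (eq_bigr (fun i => \sum_(j < N) coefX z j *: ((i == j)%:R * a j))) ?delta_sum // => i _.
      by rewrite comm_sum_r; apply: eq_bigr => j _; rewrite commGa.
    rewrite PG PY comm_sum_l (eq_bigr (fun i => - \sum_(j < N) coefY z j *: ((i == j)%:R * b j))).
      by rewrite sumrN delta_sum.
    move=> i _; rewrite comm_sum_r -sumrN; apply: eq_bigr => j _.
    by rewrite commGb // scalerN.
  - by rewrite Pt !mulr_algl !mulr_algr.
have s0 : sigma 0 = 0.
  have := sD 0 0; rewrite addr0 => H.
  by apply: (addrI (sigma 0)); rewrite -H addr0.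
have sA : forall c : C, sigma c%:A = c%:A by move=> c; rewrite sZ s1.
split.
- rewrite PX (big_morph sigma sD s0) -sumrN; apply: eq_bigr => i _.
  by rewrite sZ (Hab i).1 scalerN.
- rewrite PY (big_morph sigma sD s0) -sumrN; apply: eq_bigr => i _.
  by rewrite sZ (Hab i).2 scalerN.
- rewrite PG (big_morph sigma sD s0); apply: eq_bigr => i _.
  by rewrite sD sM sA (Hab i).1 (Hab i).2 mulrNN.
- by rewrite Pt sA.
- by rewrite Pti sA.
Qed.

Set Implicit Arguments.
Unset Strict Implicit.
Definition tl N (S : {set 'I_N.+1}) : {set 'I_N} := [set j | lift ord0 j \in S].
Definition consS N (b : bool) (S : {set 'I_N}) : {set 'I_N.+1} :=
  [set i | if unlift ord0 i is Some j then j \in S else b].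

Lemma tlE N (S : {set 'I_N.+1}) j : (j \in tl S) = (lift ord0 j \in S).
Proof. by rewrite inE. Qed.

Lemma consS0 N b (S : {set 'I_N}) : (ord0 \in consS b S) = b.
Proof. by rewrite inE unlift_none. Qed.

Lemma tl_cons N b (S : {set 'I_N}) : tl (consS b S) = S.
Proof. by apply/setP => j; rewrite tlE inE liftK. Qed.

Lemma consK N (S : {set 'I_N.+1}) : consS (ord0 \in S) (tl S) = S.
Proof.
apply/setP => i; rewrite inE; case: unliftP => [j ->|->] //.
by rewrite tlE.
Qed.

Lemma eq_setS N (R S : {set 'I_N.+1}) :
  (R == S) = ((ord0 \in R) == (ord0 \in S)) && (tl R == tl S).
Proof.
apply/eqP/andP => [->|[/eqP h /eqP t]]; first by [].
by rewrite -(consK R) -(consK S) h t.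
Qed.

Lemma card_split N (A : {set 'I_N.+1}) : #|A| = ((ord0 \in A) + #|tl A|)%N.
Proof.
rewrite -!sum1_card (big_mkcond (fun s => s \in A)) big_ord_recl.
rewrite [in RHS](big_mkcond (fun s => s \in tl A)).
change (addn (if ord0 \in A then 1%N else 0%N)
   (\sum_(i < N) (if lift ord0 i \in A then 1%N else 0%N)) = ((ord0 \in A) + \sum_(i < N) (if i \in tl A then 1 else 0))%N).
congr addn.
by apply: eq_bigr => j _; rewrite tlE.
Qed.

Lemma tl_U0 N (S : {set 'I_N.+1}) : tl (ord0 |: S) = tl S.
Proof. by apply/setP => j; rewrite !tlE !inE [lift _ _ == _]eq_sym (negbTE (neq_lift _ _)). Qed.

Lemma bump0 k : bump 0 k = k.+1.
Proof. by []. Qed.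

Lemma tl_UL N (S : {set 'I_N.+1}) (i : 'I_N) : tl (lift ord0 i |: S) = i |: tl S.
Proof. by apply/setP => j; rewrite !tlE !inE (inj_eq (@lift_inj _ ord0)). Qed.

Lemma tl_D0 N (S : {set 'I_N.+1}) : tl (S :\ ord0) = tl S.
Proof. by apply/setP => j; rewrite !tlE !inE [lift _ _ == _]eq_sym (negbTE (neq_lift _ _)). Qed.

Lemma tl_DL N (S : {set 'I_N.+1}) (i : 'I_N) : tl (S :\ lift ord0 i) = tl S :\ i.
Proof. by apply/setP => j; rewrite !tlE !inE (inj_eq (@lift_inj _ ord0)). Qed.

Lemma mem0_UL N (S : {set 'I_N.+1}) (i : 'I_N) : (ord0 \in lift ord0 i |: S) = (ord0 \in S).
Proof. by rewrite !inE (negbTE (neq_lift _ _)). Qed.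

Lemma mem0_D N (S : {set 'I_N.+1}) (i : 'I_N) : (ord0 \in S :\ lift ord0 i) = (ord0 \in S).
Proof. by rewrite !inE (neq_lift _ _). Qed.

Lemma tl_lt N (S : {set 'I_N.+1}) (i : 'I_N) :
  tl [set s in S | (s < lift ord0 i)%N] = [set s in tl S | (s < i)%N].
Proof. by apply/setP => j; rewrite !tlE !inE /= !bump0 ltnS. Qed.

Lemma mem0_lt N (S : {set 'I_N.+1}) (i : 'I_N) :
  (ord0 \in [set s in S | (s < lift ord0 i)%N]) = (ord0 \in S).
Proof. by rewrite !inE /= bump0 andbT. Qed.

Definition ua N (i : 'I_N) (R S : {set 'I_N}) : C :=
  if (i \notin S) && (R == i |: S) then (-1) ^+ #|[set s in S | (s < i)%N]| else 0.
Definition ub N (i : 'I_N) (R S : {set 'I_N}) : C :=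
  if (i \in S) && (R == S :\ i) then (-1) ^+ #|[set s in S | (s < i)%N]| else 0.

Lemma lt0_set N (S : {set 'I_N.+1}) : [set s in S | (s < @ord0 N)%N] = set0.
Proof. by apply/setP => s; rewrite !inE ltn0 andbF. Qed.

Lemma ua0 N (R S : {set 'I_N.+1}) :
  ua ord0 R S = ((ord0 \in R) && ~~ (ord0 \in S) && (tl R == tl S))%:R.
Proof.
rewrite /ua eq_setS setU11 tl_U0 lt0_set cards0 expr0.
by case: (ord0 \in R); case: (ord0 \in S); case: (tl R == tl S).
Qed.

Lemma ub0 N (R S : {set 'I_N.+1}) :
  ub ord0 R S = (~~ (ord0 \in R) && (ord0 \in S) && (tl R == tl S))%:R.
Proof.
rewrite /ub eq_setS setD11 tl_D0 lt0_set cards0 expr0.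
by case: (ord0 \in R); case: (ord0 \in S); case: (tl R == tl S).
Qed.

Lemma uaS N (R S : {set 'I_N.+1}) i :
  ua (lift ord0 i) R S = ((ord0 \in R) == (ord0 \in S))%:R * (-1) ^+ (ord0 \in S)
                          * ua i (tl R) (tl S).
Proof.
rewrite /ua eq_setS mem0_UL tl_UL -tlE card_split mem0_lt tl_lt exprD.
case: (ord0 \in R); case: (ord0 \in S); case: (i \in tl S); case: (tl R == _);
  by rewrite /= ?mul1r ?mul0r ?mulr0.
Qed.

Lemma ubS N (R S : {set 'I_N.+1}) i :
  ub (lift ord0 i) R S = ((ord0 \in R) == (ord0 \in S))%:R * (-1) ^+ (ord0 \in S)
                          * ub i (tl R) (tl S).
Proof.
rewrite /ub eq_setS mem0_D tl_DL -tlE card_split mem0_lt tl_lt exprD.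
case: (ord0 \in R); case: (ord0 \in S); case: (i \in tl S); case: (tl R == _);
  by rewrite /= ?mul1r ?mul0r ?mulr0.
Qed.
Lemma scM d (a : C) (A : 'M[C]_d) i j : (a%:M * A) i j = a * A i j.
Proof. by rewrite -mulmxE mul_scalar_mx mxE. Qed.

Lemma UNX N (z n : 'I_N -> C) r c :
  sX (UN_pullback z n) r c = \sum_(i < N) coefX z i * ua i (UNset r) (UNset c).
Proof. by rewrite /= /PhiX summxE; apply: eq_bigr => i _; rewrite scM mxE. Qed.

Lemma UNY N (z n : 'I_N -> C) r c :
  sY (UN_pullback z n) r c = \sum_(i < N) coefY z i * ub i (UNset r) (UNset c).
Proof. by rewrite /= /PhiY summxE; apply: eq_bigr => i _; rewrite scM mxE. Qed.

Lemma UNt N (z n : 'I_N -> C) r c :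
  st (UN_pullback z n) r c = (UNset r == UNset c)%:R * \prod_(i < N) z i.
Proof. by rewrite /= /Phit mxE (inj_eq enum_val_inj) mulr_natl. Qed.

Lemma UNti N (z n : 'I_N -> C) r c :
  sti (UN_pullback z n) r c = (UNset r == UNset c)%:R * (\prod_(i < N) z i)^-1.
Proof. by rewrite /= /Phiti mxE (inj_eq enum_val_inj) mulr_natl. Qed.

Lemma sqsign k : (-1) ^+ k * (-1) ^+ k = 1 :> C.
Proof. by rewrite -expr2 sqrr_sign. Qed.

Lemma uab N (i : 'I_N) r c :
  (UN_a i * UN_b i) r c = ((i \in UNset c) && (UNset r == UNset c))%:R.
Proof.
rewrite -mulmxE mxE.
case: (boolP (i \in UNset c)) => iS /=; last first.
  by rewrite big1 // => k _; rewrite [UN_b i k c]mxE /= (negbTE iS) /= mulr0.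
rewrite (bigD1 (enum_rank (UNset c :\ i))) //= big1 ?addr0; last first.
  move=> k /negbTE kn; rewrite [UN_b i k c]mxE /= iS /=.
  rewrite -(inj_eq enum_val_inj) enum_rankK /UNset in kn.
  by rewrite /UNset kn mulr0.
rewrite !mxE /= /UNset enum_rankK eqxx iS /= !inE eqxx /= setD1K //.
have -> : [set s in enum_val c :\ i | (s < i)%N] = [set s in enum_val c | (s < i)%N].
  apply/setP => s; rewrite !inE; case: eqP => [->|] //=.
  by rewrite ltnn !andbF.
by case: (_ == _); rewrite ?sqsign ?mul0r.
Qed.

Lemma addE d (A B : 'M[C]_d) i j : (A + B) i j = A i j + B i j.
Proof. by rewrite mxE. Qed.

Lemma UNG N (z n : 'I_N -> C) r c :
  sG (UN_pullback z n) r c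
  = (UNset r == UNset c)%:R * \sum_(i < N) (n i + (i \in UNset c)%:R).
Proof.
rewrite /= /PhiG summxE mulr_sumr; apply: eq_bigr => i _.
rewrite addE uab mxE (inj_eq enum_val_inj) -/(UNset r) -/(UNset c).
by case: (_ \in _); case: (_ == _); rewrite /= ?mulr1n ?mulr0n ?mul1r ?mul0r ?addr0 ?add0r.
Qed.

Definition ent_eq (M1 M2 : smod) (f : 'I_(sdim M1) -> 'I_(sdim M2)) :=
  forall r c, [/\ sX M2 (f r) (f c) = sX M1 r c, sY M2 (f r) (f c) = sY M1 r c,
     sG M2 (f r) (f c) = sG M1 r c, st M2 (f r) (f c) = st M1 r c
   & sti M2 (f r) (f c) = sti M1 r c].

Definition biso (M1 M2 : smod) := exists (f : 'I_(sdim M1) -> 'I_(sdim M2)) g,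
  [/\ cancel f g, cancel g f, forall r, spar M2 (f r) = spar M1 r & ent_eq f].

Section PermMx.
Variables (m1 m2 : nat) (f : 'I_m1 -> 'I_m2) (g : 'I_m2 -> 'I_m1).
Hypotheses (fK : cancel f g) (gK : cancel g f).
Definition pmx : 'M[C]_(m2, m1) := \matrix_(i, j) (i == f j)%:R.

Lemma pmxL p (A : 'M[C]_(m1, p)) i j : (pmx *m A) i j = A (g i) j.
Proof.
rewrite mxE (bigD1 (g i)) //= mxE gK eqxx mul1r big1 ?addr0 // => k kg.
rewrite mxE; case: eqP => [e|]; last by rewrite mul0r.
by move: kg; rewrite e fK eqxx.
Qed.

Lemma pmxR p (B : 'M[C]_(p, m2)) i j : (B *m pmx) i j = B i (f j).
Proof.
rewrite mxE (bigD1 (f j)) //= mxE eqxx mulr1 big1 ?addr0 // => k /negbTE kf.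
by rewrite mxE kf mulr0.
Qed.
End PermMx.

Lemma biso_iso M1 M2 : biso M1 M2 -> smod_iso M1 M2.
Proof.
case=> f [g [fK gK hp he]].
exists (pmx f), (pmx g); split.
- split; apply/matrixP => i j.
    by rewrite pmxR !mxE fK.
  by rewrite pmxR !mxE gK.
- move=> i j; rewrite mxE; have [->|ne] := eqVneq i (f j); first by rewrite hp.
  by rewrite eqxx.
- split; apply/matrixP => i j; rewrite (pmxL fK gK) pmxR -[in RHS](gK i);
    by have [e1 e2 e3 e4 e5] := he (g i) j.
- by apply/matrixP => i j; rewrite (pmxL fK gK) pmxR -[in RHS](gK i);
    have [e1 e2 e3 e4 e5] := he (g i) j.
- split; apply/matrixP => i j; rewrite (pmxL fK gK) pmxR -[in RHS](gK i);
    by have [e1 e2 e3 e4 e5] := he (g i) j.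
Qed.

Lemma biso_sym M1 M2 : biso M1 M2 -> biso M2 M1.
Proof.
case=> f [g [fK gK hp he]]; exists g, f; split => //.
  by move=> r; rewrite -{2}(gK r) hp.
by move=> r c; case: (he (g r) (g c)); rewrite !gK.
Qed.

Lemma biso_trans M1 M2 M3 : biso M1 M2 -> biso M2 M3 -> biso M1 M3.
Proof.
case=> f [g [fK gK hp he]] [f' [g' [fK' gK' hp' he']]].
exists (f' \o f), (g \o g'); split.
- by move=> r /=; rewrite fK' fK.
- by move=> r /=; rewrite gK gK'.
- by move=> r /=; rewrite hp' hp.
- move=> r c /=; case: (he r c) => e1 e2 e3 e4 e5; case: (he' (f r) (f c)).
  by rewrite e1 e2 e3 e4 e5.
Qed.

Lemma tensE m1 m2 n1 n2 (A : 'M[C]_(m1, n1)) (B : 'M[C]_(m2, n2)) x y x' y' :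
  (A *t B) (mxtens_index (x, y)) (mxtens_index (x', y')) = A x x' * B y y'.
Proof. exact: tensmxE. Qed.

Lemma biso_tensR M M1 M2 : biso M1 M2 -> biso (stensor M M1) (stensor M M2).
Proof.
case=> f [g [fK gK hp he]].
pose f' (k : 'I_(sdim M * sdim M1)) : 'I_(sdim M * sdim M2) :=
  mxtens_index ((mxtens_unindex k).1, f (mxtens_unindex k).2).
pose g' (k : 'I_(sdim M * sdim M2)) : 'I_(sdim M * sdim M1) :=
  mxtens_index ((mxtens_unindex k).1, g (mxtens_unindex k).2).
exists f', g'; split.
- move=> k; rewrite /f' /g' mxtens_indexK /= fK -[in RHS](mxtens_unindexK k).
  by [].
- move=> k; rewrite /f' /g' mxtens_indexK /= gK -[in RHS](mxtens_unindexK k).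
  by [].
- move=> k; change (spar M (mxtens_unindex (f' k)).1 (+) spar M2 (mxtens_unindex (f' k)).2
    = spar M (mxtens_unindex k).1 (+) spar M1 (mxtens_unindex k).2).
  by rewrite /f' mxtens_indexK hp.
- move=> r c; case: (mxtens_indexP r) => x y; case: (mxtens_indexP c) => x' y'.
  rewrite /f' !mxtens_indexK /=.
  have [e1 e2 e3 e4 e5] := he y y'.
  rewrite !addE !tensE e1 e2 e3 e4 e5 [1%:M (f y) _]mxE [1%:M y _]mxE.
  by rewrite (inj_eq (can_inj fK)).
Qed.

Definition u0 : 'I_(UNdim 0) := enum_rank (set0 : {set 'I_0}).

Lemma UN0 (u : 'I_(UNdim 0)) : u = u0.
Proof. by apply: enum_val_inj; rewrite enum_rankK; apply/setP => -[]. Qed.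

Lemma biso_unitR M (z n : 'I_0 -> C) : biso M (stensor M (UN_pullback z n)).
Proof.
pose f (r : 'I_(sdim M)) : 'I_(sdim M * UNdim 0) := mxtens_index (r, u0).
pose g (k : 'I_(sdim M * UNdim 0)) : 'I_(sdim M) := (mxtens_unindex k).1.
exists f, g; split.
- by move=> r; rewrite /f /g mxtens_indexK.
- move=> k; case: (mxtens_indexP k) => a b.
  by rewrite /f /g mxtens_indexK (UN0 b).
- move=> r; change (spar M (mxtens_unindex (f r)).1 (+) odd #|UNset (mxtens_unindex (f r)).2|
    = spar M r).
  by rewrite /f mxtens_indexK /UNset /u0 enum_rankK cards0 addbF.
- move=> r c; rewrite /f.
  rewrite /= !addE !tensE /Phit /Phiti /PhiX /PhiY /PhiG !big_ord0 invr1 !mxE eqxx.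
  by rewrite !mulr0 !mulr1 !addr0.
Qed.

Definition b2I (b : bool) : 'I_2 := if b then ord_max else ord0.

Lemma b2I_val b : (b2I b : nat) = b.
Proof. by case: b. Qed.

Lemma b2I_eq b b' : (b2I b == b2I b') = (b == b').
Proof. by case: b; case: b'. Qed.

Lemma b2I_max b : (b2I b == ord_max) = b.
Proof. by case: b. Qed.

Lemma b2IK (x : 'I_2) : b2I (x == ord_max) = x.
Proof. by apply: val_inj; case: x => [[|[|]]]. Qed.

Section VE.
Variables (z n : C) (b b' : bool).
Lemma VX : sX (Vmod z n) (b2I b) (b2I b') = (b && ~~ b')%:R.
Proof. by rewrite /= mxE; case: b; case: b'. Qed.
Lemma VY : sY (Vmod z n) (b2I b) (b2I b') = (~~ b && b')%:R * (z ^+ 2 - z^-2).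
Proof. by rewrite /= mxE; case: b; case: b'; rewrite /= ?mul1r ?mul0r. Qed.
Lemma VG : sG (Vmod z n) (b2I b) (b2I b') = (b == b')%:R * (n + b%:R).
Proof. by rewrite /= mxE b2I_eq b2I_val; case: b; case: b'; rewrite /= ?mul1r ?mul0r. Qed.
Lemma Vt : st (Vmod z n) (b2I b) (b2I b') = (b == b')%:R * z.
Proof. by rewrite /= mxE b2I_eq mulr_natl. Qed.
Lemma Vti : sti (Vmod z n) (b2I b) (b2I b') = (b == b')%:R * z^-1.
Proof. by rewrite /= mxE b2I_eq mulr_natl. Qed.
Lemma Vtp : (sti (Vmod z n) *m parity_mx (Vmod z n)) (b2I b) (b2I b')
   = (b == b')%:R * z^-1 * (-1) ^+ b'.
Proof.
rewrite /= mul_scalar_mx !mxE b2I_eq /=.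
by case: b; case: b'; rewrite /= ?mul1r ?mul0r ?mulr0 ?mulr1.
Qed.
End VE.

Section STE.
Variables (M1 M2 : smod) (x x' : 'I_(sdim M1)) (y y' : 'I_(sdim M2)).
Let i := @mxtens_index (sdim M1) (sdim M2) (x, y).
Let j := @mxtens_index (sdim M1) (sdim M2) (x', y').
Lemma stX : sX (stensor M1 M2) i j
  = sX M1 x x' * st M2 y y' + (sti M1 *m parity_mx M1) x x' * sX M2 y y'.
Proof. by rewrite /= addE !tensE. Qed.
Lemma stY : sY (stensor M1 M2) i j
  = sY M1 x x' * st M2 y y' + (sti M1 *m parity_mx M1) x x' * sY M2 y y'.
Proof. by rewrite /= addE !tensE. Qed.
Lemma stG : sG (stensor M1 M2) i j
  = sG M1 x x' * (y == y')%:R + (x == x')%:R * sG M2 y y'.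
Proof. by rewrite /= addE !tensE !mxE. Qed.
Lemma stt : st (stensor M1 M2) i j = st M1 x x' * st M2 y y'.
Proof. by rewrite /= !tensE. Qed.
Lemma stti : sti (stensor M1 M2) i j = sti M1 x x' * sti M2 y y'.
Proof. by rewrite /= !tensE. Qed.
End STE.

Lemma UNsetK N (X : {set 'I_N}) : UNset (enum_rank X) = X.
Proof. exact: enum_rankK. Qed.

Lemma biso_step N (z n : 'I_N.+1 -> C) :
  biso (UN_pullback z n)
       (stensor (Vmod (z ord0) (n ord0))
                (UN_pullback (fun j : 'I_N => z (lift ord0 j)) (fun j : 'I_N => n (lift ord0 j)))).
Proof.
set z' := fun j : 'I_N => z (lift ord0 j); set n' := fun j : 'I_N => n (lift ord0 j).
pose f (r : 'I_(UNdim N.+1)) : 'I_(2 * UNdim N) :=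
  mxtens_index (b2I (ord0 \in UNset r), enum_rank (tl (UNset r))).
pose g (k : 'I_(2 * UNdim N)) : 'I_(UNdim N.+1) :=
  enum_rank (consS ((mxtens_unindex k).1 == ord_max) (UNset (mxtens_unindex k).2)).
exists f, g; split.
- by move=> r; rewrite /f /g mxtens_indexK /= b2I_max UNsetK consK /UNset enum_valK.
- move=> k; case: (mxtens_indexP k) => x y.
  by rewrite /g mxtens_indexK /f UNsetK consS0 tl_cons b2IK /UNset enum_valK.
- move=> r; change ((val (mxtens_unindex (f r)).1 == 1%N) (+) odd #|UNset (mxtens_unindex (f r)).2|
    = odd #|UNset r|).
  rewrite /f mxtens_indexK /= b2I_val UNsetK [in RHS]card_split oddD.
  by case: (ord0 \in UNset r).
move=> r c; rewrite /f; split.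
- rewrite stX VX Vtp !UNX UNt !UNsetK [in RHS]big_ord_recl coefX0 ua0.
  set R := UNset r; set S := UNset c.
  rewrite [X in _ = _ + X](eq_bigr (fun i => (z ord0)^-1 * coefX z' i * (((ord0 \in R) == (ord0 \in S))%:R
     * (-1) ^+ (ord0 \in S) * ua i (tl R) (tl S)))); last by move=> i _; rewrite coefXS uaS.
  rewrite mulr_sumr -!mulnb !natrM.
  change (\prod_(j < N) z (lift ord0 j)) with (\prod_(j < N) z' j).
  move: (ord0 \in R) (ord0 \in S) (tl R == tl S) => hR hS e.
  f_equal; first by ring.
  by apply: eq_bigr => i _; ring.
- rewrite stY VY Vtp !UNY UNt !UNsetK [in RHS]big_ord_recl coefY0 ub0.
  set R := UNset r; set S := UNset c.
  rewrite [X in _ = _ + X](eq_bigr (fun i => (z ord0)^-1 * coefY z' i * (((ord0 \in R) == (ord0 \in S))%:R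
     * (-1) ^+ (ord0 \in S) * ub i (tl R) (tl S)))); last by move=> i _; rewrite coefYS ubS.
  rewrite mulr_sumr -!mulnb !natrM.
  change (\prod_(j < N) z (lift ord0 j)) with (\prod_(j < N) z' j).
  move: (ord0 \in R) (ord0 \in S) (tl R == tl S) => hR hS e.
  f_equal; first by ring.
  by apply: eq_bigr => i _; ring.
- rewrite stG VG !UNG !UNsetK (inj_eq (can_inj (@enum_rankK _))) b2I_eq [in RHS]big_ord_recl.
  set R := UNset r; set S := UNset c.
  rewrite [X in _ = _ * (_ + X)](eq_bigr (fun i => n' i + (i \in tl S)%:R)); last by move=> i _; rewrite tlE.
  rewrite eq_setS -!mulnb !natrM.
  move: (ord0 \in R) (ord0 \in S) (tl R == tl S) => hR hS e.
  by case: hR; case: hS => /=; ring.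
- rewrite stt Vt !UNt !UNsetK [in RHS]big_ord_recl.
  set R := UNset r; set S := UNset c.
  rewrite eq_setS -!mulnb !natrM.
  change (\prod_(j < N) z (lift ord0 j)) with (\prod_(j < N) z' j).
  move: (ord0 \in R) (ord0 \in S) (tl R == tl S) => hR hS e.
  by ring.
- rewrite stti Vti !UNti !UNsetK [in RHS]big_ord_recl invfM.
  set R := UNset r; set S := UNset c.
  rewrite eq_setS -!mulnb !natrM.
  change (\prod_(j < N) z (lift ord0 j)) with (\prod_(j < N) z' j).
  move: (ord0 \in R) (ord0 \in S) (tl R == tl S) => hR hS e.
  by ring.
Qed.

Lemma tens_cons p s : s != [::] -> tens_list (p :: s) = stensor (Vmod p.1 p.2) (tens_list s).
Proof. by case: s. Qed.

Lemma main_iso N (z n : 'I_N.+1 -> C) :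
  biso (UN_pullback z n) (tens_list [seq (z i, n i) | i <- enum 'I_N.+1]).
Proof.
elim: N z n => [|N IH] z n.
  rewrite enum_ordSl enum_ord0 /=.
  apply: biso_trans (biso_step z n) _.
  by apply: biso_sym; apply: biso_unitR.
have -> : [seq (z i, n i) | i <- enum 'I_N.+2]
   = (z ord0, n ord0) :: [seq (z (lift ord0 i), n (lift ord0 i)) | i <- enum 'I_N.+1].
  by rewrite enum_ordSl /= -map_comp.
rewrite tens_cons; last by rewrite enum_ordSl.
apply: biso_trans (biso_step z n) _; apply: biso_tensR.
exact: (IH (fun j => z (lift ord0 j)) (fun j => n (lift ord0 j))).
Qed.

Unset Implicit Arguments.

Theorem mainTheorem1 (N : nat) (z n : 'I_N -> C) :
  (0 < N)%N -> (forall i, z i != 0) ->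
  (forall (A : algType C) (a b : 'I_N -> A) (sigma : A -> A),
     cliff_rels a b -> is_parity_aut sigma ->
     (forall i, sigma (a i) = - a i /\ sigma (b i) = - b i) ->
     let sc := fun c : C => c%:A in
     Uq_rels (PhiX sc z a) (PhiY sc z b) (PhiG sc n a b) (Phit sc z) (Phiti sc z)
     /\ [/\ sigma (PhiX sc z a) = - PhiX sc z a,
            sigma (PhiY sc z b) = - PhiY sc z b,
            sigma (PhiG sc n a b) = PhiG sc n a b,
            sigma (Phit sc z) = Phit sc z
          & sigma (Phiti sc z) = Phiti sc z])
  /\
  smod_iso (UN_pullback z n) (tens_list [seq (z i, n i) | i <- enum 'I_N]).
Proof.
move=> HN Hz; split; first exact: part1 Hz.
case: N z n HN Hz => // N z n _ _.
by apply: biso_iso; apply: main_iso.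
Qed.
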